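(* Let $n\ge 4$ and let $L$ be an $n$-bow, i.e. a generic length vector satisfying the strict triangle inequality such that $\{n,i\}$ is long for every $i=1,\dots,n-1$. Then any two vertices of $\Gamma(L)$ are connected by a path in $\Gamma(L)$ of length at most $3$.
   Context: Let $n\ge 4$ and $L=(l_1,\dots,l_n)$ be positive reals with $l_i<\sum_{j\ne i}l_j$ for every $i$ (strict triangle inequality), and generic: there is no $J\subseteq[n]$ with $\sum_{i\in J}l_i=\sum_{i\notin J}l_i$. Here $[n]=\{1,\dots,n\}$ and $|L|=\sum_{i=1}^n l_i$. A set $I\subseteq[n]$ is short if $\sum_{i\in I}l_i<|L|/2$ and long otherwise. A cyclically ordered partition of $[n]$ into $k$ parts is a sequence $(A_1,\dots,A_k)$ of pairwise disjoint nonempty sets with union $[n]$, considered up to cyclic shifts $(A_1,\dots,A_k)\sim(A_2,\dots,A_k,A_1)$; there is no ordering inside a part. It is admissible if every part is short. The graph $\Gamma(L)$ has as vertices the admissible cyclically ordered partitions of $[n]$ into 3 parts, written $(I,J,K)$, and as edges the admissible cyclically ordered partitions into 4 parts $(A,B,C,D)$; such an edge is incident to each of the partitions $(A\cup B,C,D)$, $(A,B\cup C,D)$, $(A,B,C\cup D)$, $(D\cup A,B,C)$ that is admissible. Equivalently, two vertices are adjacent iff one is obtained from the other by moving a nonempty proper subset of one part into another part. The length of a path is its number of edges. *)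

(* Defs.v *)
From HB Require Import structures.
From mathcomp Require Import all_boot all_order all_algebra.
Set Implicit Arguments. Unset Strict Implicit. Unset Printing Implicit Defensive.
Import Order.TTheory GRing.Theory Num.Theory.
Local Open Scope ring_scope.

Section Polygon.
Variables (R : realFieldType) (n : nat) (l : 'I_n -> R).

Definition totlen : R := \sum_(i < n) l i.

Definition short (I : {set 'I_n}) : bool := \sum_(i in I) l i < totlen / 2%:R.
Definition long (I : {set 'I_n}) : bool := ~~ short I.

Definition triple := ({set 'I_n} * {set 'I_n} * {set 'I_n})%type.

(* admissible cyclically ordered partition into 3 parts (representative) *)
Definition adm3 (t : triple) : Prop :=
  let I := t.1.1 in let J := t.1.2 in let K := t.2 in
  [/\ [/\ I != set0, J != set0 & K != set0],
      [/\ [disjoint I & J], [disjoint J & K] & [disjoint I & K]],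
      I :|: J :|: K = [set: 'I_n] &
      [/\ short I, short J & short K]].

Definition adm4 (A B C D : {set 'I_n}) : Prop :=
  [/\ [/\ A != set0, B != set0, C != set0 & D != set0],
      [/\ [disjoint A & B], [disjoint A & C], [disjoint A & D],
          [disjoint B & C] & [disjoint B & D] /\ [disjoint C & D]],
      A :|: B :|: C :|: D = [set: 'I_n] &
      [/\ short A, short B, short C & short D]].

Definition ceq3 (t u : triple) : Prop :=
  let I := t.1.1 in let J := t.1.2 in let K := t.2 in u = (I, J, K) \/ u = (J, K, I) \/ u = (K, I, J).

(* the four 3-partitions incident to the edge (A,B,C,D) *)
Definition merge4 (A B C D : {set 'I_n}) (k : 'I_4) : triple :=
  match val k with
  | 0 => (A :|: B, C, D)
  | 1 => (A, B :|: C, D)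
  | 2 => (A, B, C :|: D)
  | _ => (D :|: A, B, C)
  end.

Definition adjG (u v : triple) : Prop :=
  exists A B C D, adm4 A B C D /\
    exists i j : 'I_4, [/\ i != j, adm3 (merge4 A B C D i), adm3 (merge4 A B C D j),
                           ceq3 u (merge4 A B C D i) & ceq3 v (merge4 A B C D j)].

Fixpoint walk_le (k : nat) (u v : triple) : Prop :=
  match k with
  | 0 => ceq3 u v
  | k'.+1 => ceq3 u v \/ exists w, adm3 w /\ adjG u w /\ walk_le k' w v
  end.

End Polygon.

(* Main.v *)
Require Import Defs.
From HB Require Import structures.
From mathcomp Require Import all_boot all_order all_algebra.
From mathcomp Require Import lra zify.
Import Order.TTheory GRing.Theory Num.Theory.
Local Open Scope ring_scope.
Set Implicit Arguments. Unset Strict Implicit.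

Lemma sum_sub (R : realFieldType) (n : nat) (l : 'I_n -> R) (hpos : forall i, 0 < l i)
  (T U : {set 'I_n}) : T \subset U -> \sum_(i in T) l i <= \sum_(i in U) l i.
Proof.
move=> TU; rewrite [X in _ <= X](big_setID T) /=.
have -> : U :&: T = T by apply/setIidPr.
rewrite lerDl; apply: sumr_ge0 => i _; exact: ltW.
Qed.

Lemma sum_cpl (R : realFieldType) (n : nat) (l : 'I_n -> R) (T : {set 'I_n}) :
  \sum_(i in T) l i + \sum_(i in ~: T) l i = totlen l.
Proof.
rewrite /totlen [RHS](bigID (fun i => i \in T)) /=; congr (_ + _).
by apply: eq_bigl => i; rewrite inE.
Qed.

Lemma short_of (R : realFieldType) (n : nat) (l : 'I_n -> R) (hpos : forall i, 0 < l i)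
  (N : 'I_n) (hpair : forall a, a != N -> totlen l / 2%:R < \sum_(i in [set a; N]) l i)
  (T : {set 'I_n}) a : a != N -> a \notin T -> N \notin T -> short l T.
Proof.
move=> aN aT NT; rewrite /short.
have h1 := hpair a aN; have h2 := sum_cpl l [set a; N].
have h3 : \sum_(i in T) l i <= \sum_(i in ~: [set a; N]) l i.
  apply: sum_sub => //; apply/subsetP => x xT; rewrite !inE.
  by apply/negP => /orP[] /eqP ex; move: xT; rewrite ex; [move/negbTE: aT ->| move/negbTE: NT ->].
lra.
Qed.

Lemma long_of (R : realFieldType) (n : nat) (l : 'I_n -> R) (hpos : forall i, 0 < l i)
  (N : 'I_n) (hpair : forall a, a != N -> totlen l / 2%:R < \sum_(i in [set a; N]) l i)
  (T : {set 'I_n}) a : a != N -> a \in T -> N \in T -> ~~ short l T.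
Proof.
move=> aN aT NT; rewrite /short -leNgt.
have h1 := hpair a aN.
have h3 : \sum_(i in [set a; N]) l i <= \sum_(i in T) l i.
  by apply: sum_sub => //; apply/subsetP => x; rewrite !inE => /orP[] /eqP ->.
lra.
Qed.
Definition cpl n (N : 'I_n) (X : {set 'I_n}) := ~: ([set N] :|: X).
Definition cv n (N : 'I_n) (X : {set 'I_n}) : triple n := ([set N], X, cpl N X).
Definition can n (N : 'I_n) (X : {set 'I_n}) : Prop :=
  [/\ N \notin X, exists a, a \in X & exists b, (b != N) && (b \notin X)].

Ltac bcase := repeat match goal with
  | |- context [?x \in ?A] => case: (x \in A)
  | |- context [?x == ?y] => case: (x == y) end; simpl; intros; try discriminate; try reflexivity.

Lemma dj_pt (n : nat) (A B : {set 'I_n}) : [disjoint A & B] -> forall x, (x \in A) && (x \in B) = false.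
Proof. move=> H x; apply/negbTE/negP => /andP[xA]; by rewrite (disjointFr H xA). Qed.

Lemma dj_of (n : nat) (A B : {set 'I_n}) : (forall x, (x \in A) && (x \in B) = false) -> [disjoint A & B].
Proof. move=> H; rewrite -setI_eq0; apply/eqP/setP => x; rewrite !inE; exact: H. Qed.

Lemma adm3_cv (R : realFieldType) (n : nat) (l : 'I_n -> R) (hpos : forall i, 0 < l i)
  (N : 'I_n) (hpair : forall a, a != N -> totlen l / 2%:R < \sum_(i in [set a; N]) l i)
  (hN : short l [set N]) X : can N X -> adm3 l (cv N X).
Proof.
case=> NX [a aX] [b /andP[bN bX]]; rewrite /adm3 /cv /cpl /=.
have aN : a != N by apply/eqP => aN; move: NX; rewrite -aN aX.
split.
{ split; apply/set0Pn; [exists N | exists a | exists b]; rewrite ?inE ?eqxx //.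
  by rewrite (negbTE bN) (negbTE bX). }
{ split; apply: dj_of => x; rewrite !inE; case: (x =P N) => [->|] //=; by rewrite ?(negbTE NX) ?andbN. }
{ by apply/setP => x; rewrite !inE; bcase. }
split => //.
{ by apply: (short_of hpos hpair bN bX). }
apply: (short_of hpos hpair (a := a)); by rewrite ?inE ?aX ?eqxx ?orbT.
Qed.

Lemma onlyN (R : realFieldType) (n : nat) (l : 'I_n -> R) (hpos : forall i, 0 < l i)
  (N : 'I_n) (hpair : forall a, a != N -> totlen l / 2%:R < \sum_(i in [set a; N]) l i)
  (T : {set 'I_n}) : short l T -> N \in T -> T = [set N].
Proof.
move=> sT NT; apply/setP => x; rewrite inE; case: (x =P N) => [->|/eqP xN] //.
apply/negbTE/negP => xT; by move: (long_of hpos hpair xN xT NT); rewrite sT.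
Qed.

Lemma canon0 (R : realFieldType) (n : nat) (l : 'I_n -> R) (hpos : forall i, 0 < l i)
  (N : 'I_n) (hpair : forall a, a != N -> totlen l / 2%:R < \sum_(i in [set a; N]) l i)
  (I J K : {set 'I_n}) : [disjoint I & J] -> [disjoint J & K] -> [disjoint I & K] ->
  I :|: J :|: K = setT -> short l I -> J != set0 -> K != set0 -> N \in I ->
  [/\ can N J, I = [set N] & K = cpl N J].
Proof.
move=> dIJ dJK dIK U sI /set0Pn [a aJ] /set0Pn [b bK] NI.
have eI := onlyN hpos hpair sI NI.
have dIJ' := dj_pt dIJ; have dJK' := dj_pt dJK; have dIK' := dj_pt dIK.
subst I; split => //.
{ split.
  - by move: (dIJ' N); rewrite !inE eqxx /= => ->.
  - by exists a.
  - exists b; apply/andP; split.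
    + by apply/eqP => bN; move: (dIK' b); rewrite bK andbT inE bN eqxx.
    + by move: (dJK' b); rewrite bK andbT => ->. }
apply/setP => x; move: (dIJ' x) (dJK' x) (dIK' x).
have : x \in [set: 'I_n] by [].
rewrite -U /cpl !inE; bcase.
Qed.

Lemma canon (R : realFieldType) (n : nat) (l : 'I_n -> R) (hpos : forall i, 0 < l i)
  (N : 'I_n) (hpair : forall a, a != N -> totlen l / 2%:R < \sum_(i in [set a; N]) l i)
  (u : triple n) : adm3 l u -> exists X, can N X /\ ceq3 u (cv N X).
Proof.
case: u => [[I J] K]; rewrite /adm3 /ceq3 /=.
case=> [[nI nJ nK] [dIJ dJK dIK] U [sI sJ sK]].
have : N \in I :|: J :|: K by rewrite U inE.
have dJI : [disjoint J & I] by rewrite disjoint_sym.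
have dKI : [disjoint K & I] by rewrite disjoint_sym.
have dKJ : [disjoint K & J] by rewrite disjoint_sym.
rewrite !inE => /orP[/orP[NI|NJ]|NK].
- have [cJ eI eK] := canon0 hpos hpair dIJ dJK dIK U sI nJ nK NI.
  exists J; split => //; left; by rewrite /cv eI eK.
- have U' : J :|: K :|: I = setT by rewrite -U; apply/setP => x; rewrite !inE; bcase.
  have [cK eJ eI] := canon0 hpos hpair dJK dKI dJI U' sJ nK nI NJ.
  exists K; split => //; right; left; by rewrite /cv eI eJ.
- have U' : K :|: I :|: J = setT by rewrite -U; apply/setP => x; rewrite !inE; bcase.
  have [cI eK eJ] := canon0 hpos hpair dKI dIJ dKJ U' sK nI nJ NK.
  exists I; split => //; right; right; by rewrite /cv eK eJ.
Qed.

Lemma can_short (R : realFieldType) (n : nat) (l : 'I_n -> R) (hpos : forall i, 0 < l i)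
  (N : 'I_n) (hpair : forall a, a != N -> totlen l / 2%:R < \sum_(i in [set a; N]) l i)
  X : can N X -> short l X.
Proof. case=> NX _ [b /andP[bN bX]]; exact: (short_of hpos hpair bN bX). Qed.

Lemma can_aN n (N : 'I_n) X a : can N X -> a \in X -> a != N.
Proof. case=> NX _ _ aX; apply/eqP => aN; move: NX; by rewrite -aN aX. Qed.

Lemma adj_sub (R : realFieldType) (n : nat) (l : 'I_n -> R) (hpos : forall i, 0 < l i)
  (N : 'I_n) (hpair : forall a, a != N -> totlen l / 2%:R < \sum_(i in [set a; N]) l i)
  (hN : short l [set N]) X Y u v : can N X -> can N Y -> X \subset Y ->
  (exists y, (y \in Y) && (y \notin X)) -> ceq3 u (cv N X) -> ceq3 v (cv N Y) -> adjG l u v.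
Proof.
move=> cX cY /subsetP XY [y /andP[yY yX]] hu hv.
have cX' := cX; have cY' := cY.
case: cX' => NX [a aX] [b /andP[bN bX]].
case: cY' => NY [a' aY] [b' /andP[b'N b'Y]].
have aN := can_aN cX aX.
have fX : forall x, (x == N) && (x \in X) = false.
  by move=> x; case: (x =P N) => [->|] //=; rewrite (negbTE NX).
have fY : forall x, (x == N) && (x \in Y) = false.
  by move=> x; case: (x =P N) => [->|] //=; rewrite (negbTE NY).
have fXY : forall x, (x \in X) ==> (x \in Y) by move=> x; apply/implyP; exact: XY.
exists [set N], X, (Y :\: X), (cpl N Y); split.
{ split.
  { split; apply/set0Pn.
    - by exists N; rewrite inE.
    - by exists a.
    - by exists y; rewrite inE yY yX.
    - by exists b'; rewrite /cpl !inE (negbTE b'N) (negbTE b'Y). }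
  { split; try split; apply: dj_of => x; move: (fX x) (fY x) (fXY x); rewrite /cpl !inE; bcase. }
  { apply/setP => x; move: (fX x) (fY x) (fXY x); rewrite /cpl !inE; bcase. }
  split => //.
  - exact: (can_short hpos hpair cX).
  - apply: (short_of hpos hpair aN); by rewrite !inE ?aX ?negbK ?andbF ?(negbTE NY) ?andbF.
  - apply: (short_of hpos hpair aN); by rewrite /cpl !inE ?(XY _ aX) ?negbK ?orbT ?eqxx. }
have e1 : X :|: Y :\: X = Y.
  by apply/setP => x; move: (fX x) (fY x) (fXY x); rewrite /cpl !inE; bcase.
have e2 : Y :\: X :|: cpl N Y = cpl N X.
  by apply/setP => x; move: (fX x) (fY x) (fXY x); rewrite /cpl !inE; bcase.
exists (@Ordinal 4 2 isT), (@Ordinal 4 1 isT); rewrite /merge4 /= e1 e2; split => //.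
- exact: adm3_cv.
- exact: adm3_cv.
Qed.

Lemma adjG_sym (R : realFieldType) (n : nat) (l : 'I_n -> R) u v : adjG l u v -> adjG l v u.
Proof.
case=> A [B [C [D [h [i [j [ij h1 h2 h3 h4]]]]]]].
exists A, B, C, D; split => //; exists j, i; split => //; by rewrite eq_sym.
Qed.

Definition step n (N : 'I_n) (X Y : {set 'I_n}) : Prop :=
  [/\ can N X, can N Y &
   ((X \subset Y /\ exists y, (y \in Y) && (y \notin X)) \/
    (Y \subset X /\ exists y, (y \in X) && (y \notin Y)))].

Lemma step_sym n (N : 'I_n) X Y : step N X Y -> step N Y X.
Proof. case=> cX cY [h|h]; split => //; by [right|left]. Qed.

Lemma adj_step (R : realFieldType) (n : nat) (l : 'I_n -> R) (hpos : forall i, 0 < l i)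
  (N : 'I_n) (hpair : forall a, a != N -> totlen l / 2%:R < \sum_(i in [set a; N]) l i)
  (hN : short l [set N]) X Y u v : step N X Y -> ceq3 u (cv N X) -> ceq3 v (cv N Y) -> adjG l u v.
Proof.
case=> cX cY [[XY hy]|[YX hy]] hu hv.
- exact: (adj_sub hpos hpair hN cX cY XY hy hu hv).
- apply: adjG_sym; exact: (adj_sub hpos hpair hN cY cX YX hy hv hu).
Qed.

Lemma ceq3_refl n (t : triple n) : ceq3 t t.
Proof. case: t => [[a b] c]; by left. Qed.

Lemma ceq3_trans n (u v c : triple n) : ceq3 u c -> ceq3 v c -> ceq3 u v.
Proof.
case: u => [[a b] d]; case: v => [[a' b'] d']; rewrite /ceq3 /=.
case=> [->|[->|->]] [[<- <- <-]|[[<- <- <-]|[<- <- <-]]]; by [left|right;left|right;right].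
Qed.

Lemma walk_refl (R : realFieldType) n (l : 'I_n -> R) k t : walk_le l k t t.
Proof. case: k => [|k] /=; [exact: ceq3_refl | left; exact: ceq3_refl]. Qed.

Lemma W1 (R : realFieldType) (n : nat) (l : 'I_n -> R) (hpos : forall i, 0 < l i)
  (N : 'I_n) (hpair : forall a, a != N -> totlen l / 2%:R < \sum_(i in [set a; N]) l i)
  (hN : short l [set N]) X Y u v k : step N X Y -> ceq3 u (cv N X) -> ceq3 v (cv N Y) ->
  adm3 l v -> walk_le l k.+1 u v.
Proof.
move=> s hu hv av /=; right; exists v; split => //; split; last exact: walk_refl.
exact: (adj_step hpos hpair hN s hu hv).
Qed.

Lemma Wk (R : realFieldType) (n : nat) (l : 'I_n -> R) (hpos : forall i, 0 < l i)
  (N : 'I_n) (hpair : forall a, a != N -> totlen l / 2%:R < \sum_(i in [set a; N]) l i)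
  (hN : short l [set N]) X Z u v k : step N X Z -> ceq3 u (cv N X) ->
  walk_le l k (cv N Z) v -> walk_le l k.+1 u v.
Proof.
move=> s hu w /=; right; exists (cv N Z); split.
  by case: s => _ cZ _; apply: adm3_cv.
split => //; exact: (adj_step hpos hpair hN s hu (ceq3_refl _)).
Qed.

Lemma wit n (A B : {set 'I_n}) : A \subset B -> A <> B -> exists y, (y \in B) && (y \notin A).
Proof.
move=> AB neq; have : ~~ (B \subset A).
  by apply/negP => BA; apply: neq; apply/eqP; rewrite eqEsubset AB BA.
case/subsetPn => y yB yA; exists y; by rewrite yB yA.
Qed.

Lemma L_meet n (N : 'I_n) X Y x : can N X -> can N Y -> X <> Y -> x \in X -> x \in Y ->
  step N X Y \/ exists Z, step N X Z /\ step N Z Y.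
Proof.
move=> cX cY neq xX xY.
have cZ : can N (X :&: Y).
  case: cX => NX _ [b /andP[bN bX]]; split.
  - by rewrite inE (negbTE NX).
  - by exists x; rewrite inE xX xY.
  - by exists b; rewrite inE (negbTE bX) bN.
case: (X :&: Y =P X) => [eX|nX].
  left; have XY : X \subset Y by rewrite -eX subsetIr.
  split => //; left; split => //; exact: wit.
case: (X :&: Y =P Y) => [eY|nY].
  left; have YX : Y \subset X by rewrite -eY subsetIl.
  split => //; right; split => //; apply: wit => // e; exact: neq.
right; exists (X :&: Y); split; split => //.
- right; split; [exact: subsetIl | exact: wit (subsetIl _ _) nX].
- left; split; [exact: subsetIr | exact: wit (subsetIr _ _) nY].
Qed.

Lemma L_join n (N : 'I_n) X Y b : can N X -> can N Y ->
  (forall x, (x \in X) && (x \in Y) = false) -> b != N -> b \notin X -> b \notin Y ->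
  exists Z, step N X Z /\ step N Z Y.
Proof.
move=> cX cY dXY bN bX bY.
have cX' := cX; have cY' := cY.
case: cX' => NX [a aX] _; case: cY' => NY [a' aY] _.
have cZ : can N (X :|: Y).
  split.
  - by rewrite inE (negbTE NX) (negbTE NY).
  - by exists a; rewrite inE aX.
  - by exists b; rewrite inE (negbTE bX) (negbTE bY) bN.
exists (X :|: Y); split; split => //.
- left; split; first exact: subsetUl.
  exists a'; rewrite inE aY orbT /=; apply/negP => a'X; by move: (dXY a'); rewrite a'X aY.
- right; split; first exact: subsetUr.
  exists a; rewrite inE aX /=; apply/negP => aY'; by move: (dXY a); rewrite aX aY'.
Qed.

Lemma L_three n (N : 'I_n) X Y p q : can N X -> can N Y ->
  (forall x, (x \in X) && (x \in Y) = false) -> p != q -> p \in X -> q \in X ->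
  exists Z1 Z2, [/\ step N X Z1, step N Z1 Z2 & step N Z2 Y].
Proof.
move=> cX cY dXY pq pX qX.
have cX' := cX; have cY' := cY.
case: cX' => NX _ _; case: cY' => NY [a' aY] _.
have pN := can_aN cX pX; have qN := can_aN cX qX.
have pY : p \notin Y by apply/negP => pY; move: (dXY p); rewrite pX pY.
have qY : q \notin Y by apply/negP => qY; move: (dXY q); rewrite qX qY.
have qp : q \notin [set p] by rewrite inE eq_sym.
have c1 : can N [set p].
  split.
  - by rewrite inE eq_sym.
  - by exists p; rewrite inE.
  - by exists q; rewrite qN qp.
have c2 : can N (p |: Y).
  split.
  - by rewrite !inE eq_sym (negbTE pN) (negbTE NY).
  - by exists p; rewrite !inE eqxx.
  - by exists q; rewrite qN !inE negb_or eq_sym pq qY.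
exists [set p], (p |: Y); split; split => //.
- right; split; first by rewrite sub1set.
  by exists q; rewrite qX qp.
- left; split; first by rewrite sub1set !inE eqxx.
  exists a'; rewrite !inE aY orbT /=; apply/negP => /eqP ea; move: pY; by rewrite -ea aY.
- right; split; first exact: subsetUr.
  by exists p; rewrite !inE eqxx pY.
Qed.

Theorem mainTheorem4 (R : realFieldType) (n : nat) (l : 'I_n -> R)
  (hn : (4 <= n)%N)
  (hpos : forall i, 0 < l i)
  (htri : forall i, l i < \sum_(j < n | j != i) l j)
  (hgen : forall J : {set 'I_n}, \sum_(i in J) l i != \sum_(i in ~: J) l i)
  (hbow : forall i last : 'I_n, val last = n.-1 -> i != last -> long l [set i; last]) :
  forall u v, adm3 l u -> adm3 l v -> walk_le l 3 u v.
Proof.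
have ltN : (n.-1 < n)%N by lia.
pose N := Ordinal ltN.
have hpair : forall a, a != N -> totlen l / 2%:R < \sum_(i in [set a; N]) l i.
  move=> a aN; have := hbow a N erefl aN; rewrite /long /short -leNgt => h.
  have H := sum_cpl l [set a; N]; have G := hgen [set a; N].
  rewrite lt_neqAle h andbT; apply/eqP => E.
  have E2 : \sum_(i in ~: [set a; N]) l i = \sum_(i in [set a; N]) l i by lra.
  by rewrite E2 eqxx in G.
have hN : short l [set N].
  rewrite /short big_set1 /totlen (bigD1 N) //=; have := htri N; lra.
have h0 : (0 < n)%N by apply: leq_trans hn.
have h1 : (1 < n)%N by apply: leq_trans hn.
have h2 : (2 < n)%N by apply: leq_trans hn.
pose e0 := Ordinal h0; pose e1 := Ordinal h1; pose e2 := Ordinal h2.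
have dN : forall e : 'I_n, (val e < 3)%N -> e != N.
  move=> e he; apply/eqP => /(congr1 val) /= E; move: he; rewrite /= E; lia.
have e0N : e0 != N by apply: dN.
have e1N : e1 != N by apply: dN.
have e2N : e2 != N by apply: dN.
have e01 : e0 != e1 by [].
have e02 : e0 != e2 by [].
have e12 : e1 != e2 by [].
move=> u v au av.
have [X [cX hu]] := canon hpos hpair au.
have [Y [cY hv]] := canon hpos hpair av.
have T1 : forall Z1 Z2, step N X Z1 -> step N Z1 Z2 -> step N Z2 Y -> walk_le l 3 u v.
  move=> Z1 Z2 s1 s2 s3.
  apply: (Wk hpos hpair hN s1 hu); apply: (Wk hpos hpair hN s2 (ceq3_refl _)).
  exact: (W1 hpos hpair hN _ s3 (ceq3_refl _) hv av).
have T2 : forall Z, step N X Z -> step N Z Y -> walk_le l 3 u v.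
  move=> Z s1 s2.
  apply: (Wk hpos hpair hN s1 hu).
  exact: (W1 hpos hpair hN _ s2 (ceq3_refl _) hv av).
have T3 : step N X Y -> walk_le l 3 u v by move=> s; exact: (W1 hpos hpair hN _ s hu hv av).
case: (X =P Y) => [eXY|nXY].
  by left; subst Y; apply: ceq3_trans hu hv.
case: (boolP [exists x, (x \in X) && (x \in Y)]) => [/existsP[x /andP[xX xY]]|nm].
  by case: (L_meet cX cY nXY xX xY) => [s|[Z [s1 s2]]]; [apply: T3 | apply: (T2 Z)].
have dXY : forall x, (x \in X) && (x \in Y) = false.
  by move=> x; apply/negbTE; move: nm; rewrite negb_exists => /forallP.
case: (boolP [exists b, (b != N) && (b \notin X) && (b \notin Y)]) => [/existsP[b /andP[/andP[bN bX] bY]]|nb].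
  by have [Z [s1 s2]] := L_join cX cY dXY bN bX bY; apply: (T2 Z).
have cov : forall b, b != N -> (b \in X) || (b \in Y).
  move=> b bN; move: nb; rewrite negb_exists => /forallP /(_ b).
  by rewrite bN /= negb_and !negbK orbC.
have dYX : forall x, (x \in Y) && (x \in X) = false by move=> x; rewrite andbC.
have TX : forall p q, p != q -> p \in X -> q \in X -> walk_le l 3 u v.
  move=> p q pq pX qX; have [Z1 [Z2 [s1 s2 s3]]] := L_three cX cY dXY pq pX qX.
  exact: (T1 Z1 Z2).
have TY : forall p q, p != q -> p \in Y -> q \in Y -> walk_le l 3 u v.
  move=> p q pq pY qY; have [Z1 [Z2 [s1 s2 s3]]] := L_three cY cX dYX pq pY qY.
  exact: (T1 Z2 Z1 (step_sym s3) (step_sym s2) (step_sym s1)).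
have c0 := cov e0 e0N; have c1 := cov e1 e1N; have c2 := cov e2 e2N.
case: (boolP (e0 \in X)) c0 => x0 c0 /=; case: (boolP (e1 \in X)) c1 => x1 c1 /=;
  case: (boolP (e2 \in X)) c2 => x2 c2 /=.
all: first [ exact: (TX _ _ e01) | exact: (TX _ _ e02) | exact: (TX _ _ e12)
           | exact: (TY _ _ e01) | exact: (TY _ _ e02) | exact: (TY _ _ e12) ].
Qed.
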